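(* Consider two instances of the baseline diffusion model that differ only in the new product. In the first, $v_{Hi}=v_H$ for all $i$ and the similarity is $s_p$; in the second, $v'_{Hi}=v'_H$ for all $i$ and the similarity is $s'_p$. Assume $(v'_H-v_H)(s'_p-s_p)<0$ and $\underline H_2<\underline H'_2$, where $\underline H_2$ and $\underline H'_2$ are defined in the context. Let $D_n^t$ and $D_n'^t$ be the corresponding sets of new-product consumers. Then: 1. If $s_p>s'_p$, then $D_n'^t\subseteq D_n^t$ for all $t\ge2$. 2. If $s_p<s'_p$, then one of the following holds: (a) $D_n'^t\subseteq D_n^t$ for all $t\ge2$; (b) there exists $\tilde t\ge2$ such that $D_n'^t\subseteq D_n^t$ for all $2\le t\le\tilde t$, and $D_n^t\subseteq D_n'^t$ for all $t>\tilde t$.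
   Context: Baseline diffusion model. There are $N\ge 2$ individuals partitioned into $G\ge 2$ nonempty groups $N_1,\dots,N_G$ (also denoting cardinalities). Members of $N_k$ have aspiration level $H_{N_k}$, with $H_{N_1}>\cdots>H_{N_G}$; write $H_i$ for individual $i$'s level. The incumbent product $p_c$ gives every individual the payoff $v_L$, where $H_{N_2}<v_L<H_{N_1}$. The new product $p_n$ gives individual $i$ the payoff $v_{Hi}\ge H_{N_1}$. Product similarities are $s_{p_c,p_c}=s_{p_n,p_n}=1$, $s_{p_n,p_c}=s_p\in(0,1)$ and $s_{p_c,p_n}=0$. Individual similarities are $s_{i,i}=1$ and $s_{i,j}=s\in(0,1]$ for $i\neq j$. Dynamics. In period $0$ everyone consumes $p_c$ ($D_c^0=\{1,\dots,N\}$, $D_n^0=\emptyset$). For $t\ge1$, $U_i^t(p_c)=\sum_{t'=0}^{t-1}\sum_{j\in D_c^{t'}}s_{i,j}(v_L-H_i)$ and $U_i^t(p_n)=s_pU_i^t(p_c)+\sum_{t'=0}^{t-1}\sum_{j\in D_n^{t'}}s_{i,j}(v_{Hj}-H_i)$. Individual $i\in D_n^t$ iff $U_i^t(p_n)>U_i^t(p_c)$; otherwise $i\in D_c^t$. Period-2 thresholds. Let $\lambda_1=\frac{s(2N-N_1-2)+2}{sN_1}$ (this is the same in both instances). Define $\mathscr F(H)=\frac{v_H-H}{(1-s_p)(v_L-H)}$ for $H<v_L$; it is strictly increasing, with range $(\frac{1}{1-s_p},\infty)$. Let $\underline H_2$ be the unique $H<v_L$ with $\mathscr F(H)=\lambda_1$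 if $\lambda_1>\frac1{1-s_p}$, and $\underline H_2=-\infty$ otherwise. Define $\underline H'_2$ analogously with $v'_H,s'_p$ in place of $v_H,s_p$. (With these definitions, $D_n^2=\{i:H_i>\underline H_2\}$ and $D_n'^2=\{i:H_i>\underline H'_2\}$.) *)

(* Defs.v *)
From mathcomp Require Import all_boot all_order all_algebra.
Set Implicit Arguments. Unset Strict Implicit. Unset Printing Implicit Defensive.
Import Order.TTheory GRing.Theory Num.Theory.
Local Open Scope ring_scope.

Section Diffusion.
Variables (R : realFieldType) (N : nat).
(* Hi : aspiration level of individual i; s : similarity between distinct
   individuals; vL : incumbent payoff; vH j : new-product payoff of j;
   sp : similarity s_{p_n,p_c}. *)
Variables (Hi : 'I_N -> R) (s vL : R) (vH : 'I_N -> R) (sp : R).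

Definition sim (i j : 'I_N) : R := if i == j then 1 else s.

(* A history is the list [:: D_n^0; ...; D_n^{t-1}]; D_c^{t'} = ~: D_n^{t'}. *)
Definition Uc (h : seq {set 'I_N}) (i : 'I_N) : R :=
  \sum_(D <- h) \sum_(j in ~: D) sim i j * (vL - Hi i).

Definition Un (h : seq {set 'I_N}) (i : 'I_N) : R :=
  sp * Uc h i + \sum_(D <- h) \sum_(j in D) sim i j * (vH j - Hi i).

Definition next_Dn (h : seq {set 'I_N}) : {set 'I_N} :=
  [set i | Uc h i < Un h i].

Fixpoint hist (t : nat) : seq {set 'I_N} :=
  match t with
  | 0 => [:: set0]
  | t'.+1 => rcons (hist t') (next_Dn (hist t'))
  end.

Definition Dn (t : nat) : {set 'I_N} := last set0 (hist t).
End Diffusion.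

(* Thresholds: None stands for -infinity. *)
Definition lambda1 (R : realFieldType) (N N1 : nat) (s : R) : R :=
  (s * ((2 * N)%:R - N1%:R - 2) + 2) / (s * N1%:R).

Definition scrF (R : realFieldType) (vH sp vL H : R) : R :=
  (vH - H) / ((1 - sp) * (vL - H)).

Definition is_lowerH2 (R : realFieldType) (lam vH sp vL : R) (x : option R) : Prop :=
  if 1 / (1 - sp) < lam then
    exists H, x = Some H /\ H < vL /\ scrF vH sp vL H = lam
  else x = None.

Definition thr_lt (R : realFieldType) (a b : option R) : Prop :=
  match a, b with
  | None, Some _ => True
  | Some x, Some y => x < y
  | _, _ => False
  end.

(* Main.v *)
Require Import Defs.
From mathcomp Require Import all_boot all_order all_algebra.
From mathcomp Require Import ring lra.
From Stdlib Require Import Classical.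
Import Order.TTheory GRing.Theory Num.Theory.
Local Open Scope ring_scope.
Set Implicit Arguments. Unset Strict Implicit. Unset Printing Implicit Defensive.

Lemma sum_pos_step (R : realFieldType) (f : nat -> R) n :
  (forall k, (k <= n)%N -> f k <= f k.+1) ->
  0 < \sum_(k < n.+1) f k -> 0 < \sum_(k < n.+2) f k.
Proof.
move=> Hf Hs.
have Hle : forall k, (k <= n)%N -> f k <= f n.
  move=> k; elim: n Hf {Hs} => [|n IH] Hf' Hk.
    by move: Hk; rewrite leqn0 => /eqP ->.
  move: Hk; rewrite leq_eqVlt => /orP [/eqP -> //|Hk].
  apply: le_trans (IH _ Hk) (Hf' n (leqnSn n)).
  by move=> j Hj; apply: Hf'; apply: (leq_trans Hj).
have Hfn : 0 < f n.
  rewrite ltNge; apply/negP => Hn.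
  have : \sum_(k < n.+1) f k <= 0.
    apply: le_trans (_ : \sum_(k < n.+1) f n <= 0).
      by apply: ler_sum => k _; apply: Hle; rewrite -ltnS.
    by rewrite sumr_const card_ord; apply: mulrn_wle0.
  by rewrite leNgt Hs.
rewrite big_ord_recr /=; apply: addr_gt0 => //.
by apply: lt_le_trans Hfn (Hf n (leqnn n)).
Qed.

Section Inst.
Variables (R : realFieldType) (N : nat) (Hi : 'I_N -> R) (s vL vH sp : R).
Hypothesis s_gt0 : 0 < s.
Hypothesis s_le1 : s <= 1.
Hypothesis sp_lt1 : sp < 1.
Hypothesis N_gt0 : (0 < N)%N.

Definition MM := s * N%:R + (1 - s).
Definition Pm (i : 'I_N) (D : {set 'I_N}) := \sum_(j in D) sim s i j.

Lemma Pm_formula i D : Pm i D = s * #|D|%:R + (1 - s) * (i \in D)%:R.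
Proof.
rewrite /Pm; case: (boolP (i \in D)) => iD.
  rewrite (big_setD1 i iD) /= /sim eqxx.
  rewrite (eq_bigr (fun _ => s)); last first.
    by move=> j; rewrite !inE => /andP [Hj _]; rewrite eq_sym (negbTE Hj).
  rewrite sumr_const (cardsD1 i D) iD add1n -[s *+ _]mulr_natr -add1n natrD; ring.
rewrite (eq_bigr (fun _ => s)); last first.
  by move=> j Hj; rewrite /sim; case: eqP => // E; by rewrite E Hj in iD.
by rewrite sumr_const -[s *+ _]mulr_natr /= mulr0 addr0.
Qed.

Lemma Pm_ge0 i D : 0 <= Pm i D.
Proof. by apply: sumr_ge0 => j _; rewrite /sim; case: eqP => // _; apply: ltW. Qed.

Lemma Pm_leM i D : Pm i D <= MM.
Proof.
rewrite Pm_formula /MM.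
have h1 : (#|D|%:R : R) <= N%:R by rewrite ler_nat; apply: leq_trans (max_card _) _; rewrite card_ord.
have h2 : ((i \in D)%:R : R) <= 1 by case: (i \in D).
have h3 : 0 <= 1 - s by rewrite subr_ge0.
apply: lerD; first by rewrite ler_pM2l.
by rewrite -[X in _ <= X]mulr1; apply: ler_wpM2l.
Qed.

Lemma Pm_mono i (D D' : {set 'I_N}) : D \subset D' -> Pm i D <= Pm i D'.
Proof.
move=> sub; rewrite !Pm_formula.
have h3 : 0 <= 1 - s by rewrite subr_ge0.
apply: lerD; first by rewrite ler_pM2l // ler_nat; apply: subset_leq_card.
apply: ler_wpM2l => //; case iD: (i \in D) => /=; last by case: (i \in D').
by rewrite (subsetP sub _ iD).
Qed.

Lemma Pm_setC i D : \sum_(j in ~: D) sim s i j = MM - Pm i D.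
Proof.
have : \sum_(j in ~: D) sim s i j = Pm i (~: D) by [].
move=> ->; rewrite !Pm_formula /MM inE.
have := cardsC D; rewrite card_ord => E.
have E' : (#|~: D|%:R : R) = N%:R - #|D|%:R by apply/eqP; rewrite eq_sym subr_eq -natrD addnC E.
by rewrite E'; case: (i \in D) => /=; ring.
Qed.

Let vHf := fun _ : 'I_N => vH.
Let D := Dn Hi s vL vHf sp.
Let hist := hist Hi s vL vHf sp.

Lemma mem_next h i : (i \in next_Dn Hi s vL vHf sp h) =
  (0 < \sum_(E <- h) ((vH - Hi i) * Pm i E - (1 - sp) * ((MM - Pm i E) * (vL - Hi i)))).
Proof.
have E1 : Uc Hi s vL h i = \sum_(E <- h) (MM - Pm i E) * (vL - Hi i).
  rewrite /Uc; apply: eq_bigr => E _.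
  have -> : forall c, \sum_(j in ~: E) sim s i j * c = (\sum_(j in ~: E) sim s i j) * c by move=> c; rewrite mulr_suml.
  by rewrite Pm_setC.
have E2 : \sum_(E <- h) \sum_(j in E) sim s i j * (vHf j - Hi i) =
          \sum_(E <- h) (vH - Hi i) * Pm i E.
  apply: eq_bigr => E _; rewrite /vHf.
  have -> : forall c, \sum_(j in E) sim s i j * c = (\sum_(j in E) sim s i j) * c by move=> c; rewrite mulr_suml.
  by rewrite mulrC.
rewrite inE /Un E2 E1 -subr_gt0 sumrB -!mulr_sumr.
set A := \sum_(E <- h) _; set B := \sum_(E <- h) _.
congr (0 < _); ring.
Qed.

Hypothesis vL_lt_vH : vL < vH.
Hypothesis Hi_cases : forall i, Hi i < vL \/ (vL < Hi i /\ Hi i <= vH).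

Lemma MM_gt0 : 0 < MM.
Proof.
rewrite /MM; have h : (1%:R : R) <= N%:R by rewrite ler_nat.
have h3 : 0 <= 1 - s by rewrite subr_ge0.
have : s * 1 <= s * N%:R by rewrite ler_pM2l.
rewrite mulr1 => h4; lra.
Qed.

Lemma Dn_succ t : D t.+1 = next_Dn Hi s vL vHf sp (hist t).
Proof. by rewrite /D /Dn /= last_rcons. Qed.

Lemma D0 : D 0 = set0.
Proof. by []. Qed.

Lemma sum_hist (f : {set 'I_N} -> R) t :
  \sum_(E <- hist t) f E = \sum_(k < t.+1) f (D k).
Proof.
elim: t => [|t IH]; first by rewrite /hist /= big_seq1 big_ord1.
by rewrite /hist /= -cats1 big_cat /= big_seq1 -/hist IH [in RHS]big_ord_recr /= Dn_succ.
Qed.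

Definition Z i E := (vH - Hi i) * Pm i E - (1 - sp) * ((MM - Pm i E) * (vL - Hi i)).

Lemma memD t i : (i \in D t.+1) = (0 < \sum_(k < t.+1) Z i (D k)).
Proof. by rewrite Dn_succ mem_next sum_hist. Qed.

Lemma Pm0 i : Pm i set0 = 0.
Proof. by rewrite Pm_formula cards0 inE /= mulr0 mulr0 addr0. Qed.

Lemma top t i : vL < Hi i -> Hi i <= vH -> i \in D t.+1.
Proof.
move=> h1 h2; rewrite memD big_ord_recl /=.
have hs : 0 < 1 - sp by rewrite subr_gt0.
apply: lt_le_trans (_ : 0 < Z i (D 0) + 0) _; last first.
  apply: lerD => //; apply: sumr_ge0 => k _; rewrite /Z.
  rewrite subr_ge0; apply: le_trans (_ : 0 <= _); last first.
    by apply: mulr_ge0; [rewrite subr_ge0 | apply: Pm_ge0].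
  rewrite mulr_ge0_le0 //; first exact: ltW.
  rewrite mulr_ge0_le0 //; first by rewrite subr_ge0 Pm_leM.
  by rewrite subr_le0 ltW.
rewrite addr0 /Z D0 Pm0 mulr0 subr0 add0r oppr_gt0.
by rewrite pmulr_rlt0 // pmulr_rlt0 ?MM_gt0 // subr_lt0.
Qed.

Lemma Z_alt i E : Z i E = ((vH - Hi i) + (1 - sp) * (vL - Hi i)) * Pm i E - (1 - sp) * (vL - Hi i) * MM.
Proof. rewrite /Z; ring. Qed.

Lemma mono_aux t : forall k, (k <= t)%N -> D k \subset D k.+1.
Proof.
elim: t => [|t IH] k Hk.
  by move: Hk; rewrite leqn0 => /eqP ->; rewrite D0 sub0set.
move: Hk; rewrite leq_eqVlt => /orP [/eqP ->|Hk]; last by apply: IH.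
apply/subsetP => i; case: (Hi_cases i) => [hl|[h1 h2]]; last by move=> _; apply: top.
rewrite !memD => Hs; apply: (@sum_pos_step _ (fun k => Z i (D k)) t) => // j Hj.
have hs : 0 < 1 - sp by rewrite subr_gt0.
rewrite !Z_alt lerB // ler_wpM2l ?Pm_mono ?IH //.
apply: addr_ge0; first by rewrite subr_ge0 ltW // (lt_trans hl vL_lt_vH).
by apply: mulr_ge0; rewrite ltW // subr_gt0.
Qed.

Lemma mono t : D t \subset D t.+1.
Proof. exact: (mono_aux (leqnn t)). Qed.

Lemma mono_le k n : (k <= n)%N -> D k \subset D n.
Proof.
elim: n => [|n IH]; first by rewrite leqn0 => /eqP ->.
rewrite leq_eqVlt => /orP [/eqP ->//|Hk].
by apply: subset_trans (IH Hk) (mono n).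
Qed.

Definition cD k : R := #|D k|%:R.
Definition X t := s * \sum_(k < t) cD k.
Definition W i k := ((vH - Hi i) + (1 - sp) * (vL - Hi i)) * (s * cD k) - (1 - sp) * (vL - Hi i) * MM.

Lemma cD_mono k n : (k <= n)%N -> cD k <= cD n.
Proof. by move=> h; rewrite /cD ler_nat; apply: subset_leq_card; apply: mono_le. Qed.

Lemma charW n i : Hi i < vL -> (i \in D n.+1) = (0 < \sum_(k < n.+1) W i k).
Proof.
move=> hl.
have hs : 0 < 1 - sp by rewrite subr_gt0.
have hab : 0 < (vH - Hi i) + (1 - sp) * (vL - Hi i).
  by apply: addr_gt0; rewrite ?subr_gt0 ?(lt_trans hl vL_lt_vH) // mulr_gt0 // subr_gt0.
have Zw : forall k, Z i (D k) = W i k + ((vH - Hi i) + (1 - sp) * (vL - Hi i)) * (1 - s) * (i \in D k)%:R.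
  by move=> k; rewrite Z_alt Pm_formula /W /cD; ring.
have h1s : 0 <= 1 - s by rewrite subr_ge0.
apply/idP/idP.
  elim: n => [|n IH] Hin.
    move: Hin; rewrite memD !big_ord1 Zw D0 inE /=.
    by rewrite mulr0 addr0.
  case: (boolP (i \in D n.+1)) => Hn.
    apply: (@sum_pos_step _ (W i) n); last exact: IH.
    move=> k _; rewrite /W lerB // ler_wpM2l ?(ltW hab) // ler_wpM2l ?(ltW s_gt0) //.
    exact: cD_mono.
  move: Hin; rewrite memD; congr (0 < _); apply: eq_bigr => k _.
  rewrite Zw.
  have -> : (i \in D k) = false.
    apply/negP => Hk; move/negP: Hn; apply.
    by apply: (subsetP (mono_le _)) Hk; rewrite -ltnS.
  by rewrite mulr0 addr0.
rewrite memD => Hs; apply: lt_le_trans Hs _.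
apply: ler_sum => k _; rewrite Zw lerDl.
by apply: mulr_ge0; [apply: mulr_ge0 => //; apply: ltW | case: (i \in D k)].
Qed.

Lemma char t i : (0 < t)%N -> Hi i < vL ->
  (i \in D t) = ((1 - sp) * (vL - Hi i) * (t%:R * MM - X t) < (vH - Hi i) * X t).
Proof.
case: t => // n _ hl; rewrite charW //.
have -> : \sum_(k < n.+1) W i k =
   ((vH - Hi i) + (1 - sp) * (vL - Hi i)) * X n.+1 - n.+1%:R * ((1 - sp) * (vL - Hi i) * MM).
  rewrite /W sumrB -!mulr_sumr sumr_const card_ord -[MM *+ _]mulr_natl /X; ring.
rewrite -[in RHS]subr_gt0; congr (0 < _); ring.
Qed.

Lemma D1 : D 1 = [set i | vL < Hi i].
Proof.
apply/setP => i; rewrite [in RHS]inE.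
case: (Hi_cases i) => [hl|[h1 h2]]; last by rewrite h1 top.
rewrite char // /X big_ord1 /cD D0 cards0 mulr0 mulr0 subr0 mul1r.
have hs : 0 < 1 - sp by rewrite subr_gt0.
rewrite ltNge mulr_ge0 /=.
- by rewrite ltNge (ltW hl).
- by apply: mulr_ge0; apply: ltW; rewrite // subr_gt0.
- exact: ltW MM_gt0.
Qed.

Lemma XS t : X t.+1 = X t + s * cD t.
Proof. by rewrite /X big_ord_recr /= mulrDr. Qed.

Lemma cD_ge0 k : 0 <= cD k.
Proof. by rewrite /cD ler0n. Qed.

Lemma X2 : X 2 = s * #|[set i | vL < Hi i]|%:R.
Proof. by rewrite XS /X big_ord1 /cD D0 cards0 mulr0 add0r D1. Qed.

Hypothesis grp0_ne : exists i, vL < Hi i.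

Lemma X2_gt0 : 0 < X 2.
Proof.
rewrite X2 mulr_gt0 // ltr0n; case: grp0_ne => i hi.
by apply/card_gt0P; exists i; rewrite inE.
Qed.

Lemma X_ge2 t : (2 <= t)%N -> X 2 <= X t.
Proof.
elim: t => [|t IH] //; rewrite leq_eqVlt => /orP [/eqP <- //|Ht].
rewrite [X t.+1]XS; apply: le_trans (IH Ht) _; rewrite lerDl mulr_ge0 ?cD_ge0 //.
exact: ltW.
Qed.

Lemma X_gt0 t : (2 <= t)%N -> 0 < X t.
Proof. by move=> h; apply: lt_le_trans X2_gt0 (X_ge2 h). Qed.

Lemma q_step t : (2 <= t)%N -> t.+1%:R / X t.+1 <= t%:R / X t.
Proof.
move=> h; have h1 := X_gt0 h; have h2 : (2 <= t.+1)%N by apply: leqW.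
have h3 := X_gt0 h2.
rewrite ler_pdivrMr // mulrAC ler_pdivlMr // XS.
have : X t <= s * (t%:R * cD t).
  rewrite /X; apply: ler_wpM2l; first exact: ltW.
  apply: le_trans (_ : \sum_(k < t) cD t <= _).
    by apply: ler_sum => k _; apply: cD_mono; apply: ltnW.
  by rewrite sumr_const card_ord mulr_natl.
rewrite -natr1 => hX; nra.
Qed.

Lemma q_mono t0 t : (2 <= t0)%N -> (t0 <= t)%N -> t%:R / X t <= t0%:R / X t0.
Proof.
move=> h0; elim: t => [|t IH]; first by rewrite leqn0 => /eqP <-.
rewrite leq_eqVlt => /orP [/eqP <- //|Ht].
apply: le_trans (q_step _) (IH Ht); exact: leq_trans h0 Ht.
Qed.

Definition rr t := (t%:R * MM - X t) / X t.

Lemma rr_q t : (2 <= t)%N -> rr t = MM * (t%:R / X t) - 1.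
Proof. move=> h; have := X_gt0 h; rewrite /rr => hX; field; exact: lt0r_neq0. Qed.

Lemma charF t i : (2 <= t)%N -> Hi i < vL ->
  (i \in D t) = (rr t < scrF vH sp vL (Hi i)).
Proof.
move=> h hl; have hX := X_gt0 h.
have hs : 0 < 1 - sp by rewrite subr_gt0.
have hb : 0 < (1 - sp) * (vL - Hi i) by rewrite mulr_gt0 // subr_gt0.
rewrite char ?(leq_trans _ h) // /rr /scrF ltr_pdivrMr // [in RHS]mulrAC [in RHS]ltr_pdivlMr //.
by rewrite [X in X < _]mulrC.
Qed.

End Inst.

Section Fs.
Variable R : realFieldType.

Lemma div_lt (a b c d : R) : 0 < b -> 0 < d -> (a / b < c / d) = (a * d < c * b).
Proof. by move=> hb hd; rewrite ltr_pdivrMr // mulrAC ltr_pdivlMr. Qed.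

Lemma F_inc (vH sp vL H1 H2 : R) : sp < 1 -> vL < vH -> H1 < H2 -> H2 < vL ->
  scrF vH sp vL H1 < scrF vH sp vL H2.
Proof.
move=> h1 h2 h3 h4; rewrite /scrF div_lt.
- have hs : 0 < 1 - sp by rewrite subr_gt0.
  have : 0 < (1 - sp) * ((H2 - H1) * (vH - vL)) by rewrite !mulr_gt0 // subr_gt0.
  move=> h; nra.
- by rewrite mulr_gt0 // subr_gt0 // (lt_trans h3 h4).
- by rewrite mulr_gt0 // subr_gt0.
Qed.

Lemma F_le (vH sp vL H1 H2 : R) : sp < 1 -> vL < vH -> H1 <= H2 -> H2 < vL ->
  scrF vH sp vL H1 <= scrF vH sp vL H2.
Proof.
move=> h1 h2; rewrite le_eqVlt => /orP [/eqP -> //|h3] h4.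
by apply: ltW; apply: F_inc.
Qed.

Lemma F_gt (vH sp vL H : R) : sp < 1 -> vL < vH -> H < vL -> 1 / (1 - sp) < scrF vH sp vL H.
Proof.
move=> h1 h2 h3; have hs : 0 < 1 - sp by rewrite subr_gt0.
rewrite /scrF div_lt //; last by rewrite mulr_gt0 // subr_gt0.
have : 0 < (1 - sp) * (vH - vL) by rewrite mulr_gt0 // subr_gt0.
move=> h; nra.
Qed.

Lemma FmF (vH sp vH' sp' vL H : R) : sp < 1 -> sp' < 1 -> H < vL ->
  scrF vH sp vL H - scrF vH' sp' vL H =
  ((vH - H) * (1 - sp') - (vH' - H) * (1 - sp)) / ((1 - sp) * (1 - sp') * (vL - H)).
Proof.
move=> h1 h2 h3; rewrite /scrF; field.
by rewrite !lt0r_neq0 // subr_gt0.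
Qed.

End Fs.

Lemma sum_diff (R : realFieldType) (f g : nat -> R) t0 t : (t0 <= t)%N ->
  (forall k, (t0 <= k)%N -> (k < t)%N -> f k <= g k) ->
  \sum_(k < t) f k - \sum_(k < t) g k <= \sum_(k < t0) f k - \sum_(k < t0) g k.
Proof.
elim: t => [|t IH]; first by rewrite leqn0 => /eqP ->.
rewrite leq_eqVlt => /orP [/eqP -> //|Ht] Hfg.
rewrite !big_ord_recr /=; apply: le_trans (IH Ht _); last first.
  by move=> k h1 h2; apply: Hfg => //; apply: ltnW.
have := Hfg t Ht (ltnSn t); lra.
Qed.

Theorem proposition3 (R : realFieldType) (N G : nat)
    (grp : 'I_N -> nat) (Hg : nat -> R) (vL s vH vH' sp sp' : R)
    (h2 h2' : option R) :
    (2 <= N)%N -> (2 <= G)%N ->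
    (* groups 0..G-1, each nonempty; group 0 is N_1, group 1 is N_2 *)
    (forall i, (grp i < G)%N) ->
    (forall k, (k < G)%N -> exists i, grp i = k) ->
    (forall k l, (k < l)%N -> (l < G)%N -> Hg l < Hg k) ->
    Hg 1%N < vL -> vL < Hg 0%N ->
    0 < s -> s <= 1 ->
    0 < sp -> sp < 1 -> 0 < sp' -> sp' < 1 ->
    Hg 0%N <= vH -> Hg 0%N <= vH' ->
    (vH' - vH) * (sp' - sp) < 0 ->
    let Hi := fun i => Hg (grp i) in
    let N1 := #|[set i | grp i == 0%N]| in
    let lam := lambda1 N N1 s in
    is_lowerH2 lam vH sp vL h2 ->
    is_lowerH2 lam vH' sp' vL h2' ->
    thr_lt h2 h2' ->
    let D := Dn Hi s vL (fun _ => vH) sp in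
    let D' := Dn Hi s vL (fun _ => vH') sp' in
    (sp' < sp -> forall t, (2 <= t)%N -> D' t \subset D t) /\
    (sp < sp' ->
       (forall t, (2 <= t)%N -> D' t \subset D t) \/
       (exists tt, (2 <= tt)%N /\
          (forall t, (2 <= t)%N -> (t <= tt)%N -> D' t \subset D t) /\
          (forall t, (tt < t)%N -> D t \subset D' t))).
Proof.
move=> HN HG Hgrp Hsurj Hdec H1L HL0 s0 s1 sp0 sp1 spp0 spp1 hvH hvH' hsign Hi N1 lam
  h2P h2P' hlt D D'.
have N0 : (0 < N)%N by apply: leq_trans HN.
have hvL : vL < vH by apply: lt_le_trans HL0 hvH.
have hvL' : vL < vH' by apply: lt_le_trans HL0 hvH'.
have Hlow : forall i, grp i != 0%N -> Hi i < vL.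
  move=> i hi; rewrite /Hi; have : (1 <= grp i)%N by rewrite lt0n.
  rewrite leq_eqVlt => /orP [/eqP <- // | h].
  exact: lt_trans (Hdec 1%N (grp i) h (Hgrp i)) H1L.
have Hhigh : forall i, grp i = 0%N -> vL < Hi i /\ Hi i <= vH /\ Hi i <= vH'.
  by move=> i hi; rewrite /Hi hi.
have Hc : forall i, Hi i < vL \/ vL < Hi i /\ Hi i <= vH.
  move=> i; case: (eqVneq (grp i) 0%N) => hi; last by left; apply: Hlow.
  by right; have [? [? ?]] := Hhigh i hi.
have Hc' : forall i, Hi i < vL \/ vL < Hi i /\ Hi i <= vH'.
  move=> i; case: (eqVneq (grp i) 0%N) => hi; last by left; apply: Hlow.
  by right; have [? [? ?]] := Hhigh i hi.
have G0 : exists i, vL < Hi i.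
  have [i hi] := Hsurj 0%N (leq_trans (isT : (0 < 2)%N) HG).
  by exists i; have [? _] := Hhigh i hi.
have hgrp : forall i, (vL < Hi i) = (grp i == 0%N).
  move=> i; case: (eqVneq (grp i) 0%N) => hi; first by have [-> _] := Hhigh i hi.
  by apply/negbTE; rewrite -leNgt ltW // Hlow.
have N1eq : #|[set i | vL < Hi i]| = N1.
  by rewrite /N1; apply: eq_card => i; rewrite !inE hgrp.
have cF := charF s0 s1 sp1 N0 hvL Hc G0.
have cF' := charF s0 s1 spp1 N0 hvL' Hc' G0.
have tp := top s0 s1 sp1 N0.
have tp' := top s0 s1 spp1 N0.
have ml := mono_le s0 s1 sp1 N0 hvL Hc.
have ml' := mono_le s0 s1 spp1 N0 hvL' Hc'.
have rq := rr_q s0 s1 sp1 N0 hvL Hc G0.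
have rq' := rr_q s0 s1 spp1 N0 hvL' Hc' G0.
have qm := q_mono s0 s1 sp1 N0 hvL Hc G0.
have qm' := q_mono s0 s1 spp1 N0 hvL' Hc' G0.
have Xp := X_gt0 s0 s1 sp1 N0 hvL Hc G0.
have Xp' := X_gt0 s0 s1 spp1 N0 hvL' Hc' G0.
have d1 := D1 s0 s1 sp1 N0 hvL Hc.
have d1' := D1 s0 s1 spp1 N0 hvL' Hc'.
have x2 := X2 s0 s1 sp1 N0 hvL Hc.
have x2' := X2 s0 s1 spp1 N0 hvL' Hc'.
have grp0D : forall t i, (0 < t)%N -> grp i = 0%N -> i \in D t.
  move=> [|t] i // _ hi; have [e1 [e2 _]] := Hhigh i hi; exact: tp.
have grp0D' : forall t i, (0 < t)%N -> grp i = 0%N -> i \in D' t.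
  move=> [|t] i // _ hi; have [e1 [_ e2]] := Hhigh i hi; exact: tp'.
have N1pos : 0 < (N1%:R : R).
  by rewrite -N1eq ltr0n; apply/card_gt0P; case: G0 => i hi; exists i; rewrite inE.
have rl : rr Hi s vL vH sp 2 = lam.
  rewrite /rr x2 N1eq /lam /lambda1 /MM natrM; field.
  by rewrite !lt0r_neq0.

have rl' : rr Hi s vL vH' sp' 2 = lam.
  rewrite /rr x2' N1eq /lam /lambda1 /MM natrM; field.
  by rewrite !lt0r_neq0.
have fin : (forall t, (2 <= t)%N -> D' t \subset D t) ->
  (sp' < sp -> forall t, (2 <= t)%N -> D' t \subset D t) /\
  (sp < sp' ->
     (forall t, (2 <= t)%N -> D' t \subset D t) \/
     (exists tt, (2 <= tt)%N /\
        (forall t, (2 <= t)%N -> (t <= tt)%N -> D' t \subset D t) /\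
        (forall t, (tt < t)%N -> D t \subset D' t))).
  by move=> H; split => _ //; left.
move: hlt h2P h2P'; rewrite /is_lowerH2.
case: ifP => hc; last first.
  move=> _ _ _; apply: fin => t ht; apply/subsetP => i _.
  case: (eqVneq (grp i) 0%N) => hi; first by apply: grp0D => //; apply: leq_trans ht.
  apply: (subsetP (ml 2%N t ht)); rewrite cF // ?Hlow // rl.
  apply: le_lt_trans (F_gt sp1 hvL (Hlow i hi)); by rewrite leNgt hc.
move=> hlt [x [hx2 [hx hFx]]]; case: ifP => hc'; last first.
  by move=> hn; rewrite hx2 hn in hlt.
move=> [y [hy2 [hy hFy]]]; rewrite hx2 hy2 /= in hlt.
have hs : 0 < 1 - sp by rewrite subr_gt0.
have hs' : 0 < 1 - sp' by rewrite subr_gt0.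
pose Gf := fun H => (vH - H) * (1 - sp') - (vH' - H) * (1 - sp).
have sgn : forall H, H < vL ->
    scrF vH sp vL H - scrF vH' sp' vL H = Gf H / ((1 - sp) * (1 - sp') * (vL - H)).
  by move=> H hH; rewrite FmF.
have denp : forall H, H < vL -> 0 < (1 - sp) * (1 - sp') * (vL - H).
  by move=> H hH; rewrite !mulr_gt0 // subr_gt0.
have hGx : 0 < Gf x.
  have e1 : scrF vH' sp' vL x < scrF vH sp vL x by rewrite hFx -hFy; apply: F_inc.
  have e2 : 0 < Gf x / ((1 - sp) * (1 - sp') * (vL - x)) by rewrite -sgn // subr_gt0.
  by have := mulr_gt0 e2 (denp x hx); rewrite divfK // lt0r_neq0 // denp.
have GL : forall H, Gf H = Gf x + (H - x) * (sp' - sp) by move=> H; rewrite /Gf; ring.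
have sub01 : forall k, (k < 2)%N -> D' k = D k.
  by case=> [|[|k]] // _; rewrite /D /D' d1 d1'.
have D2c : forall i, grp i != 0%N -> (i \in D 2) = (lam < scrF vH sp vL (Hi i)).
  by move=> i hi; rewrite cF ?Hlow // rl.
have D2c' : forall i, grp i != 0%N -> (i \in D' 2) = (lam < scrF vH' sp' vL (Hi i)).
  by move=> i hi; rewrite cF' ?Hlow // rl'.
have Sub2 : D' 2 \subset D 2.
  apply/subsetP => i; case: (eqVneq (grp i) 0%N) => hi; first by move=> _; apply: grp0D.
  rewrite D2c' // D2c // => h.
  have hyi : y < Hi i.
    rewrite ltNge; apply/negP => hle; move: h; rewrite -hFy ltNge.
    by rewrite F_le // Hlow.
  by rewrite -hFx F_inc // ?Hlow // (lt_trans hlt hyi).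
have Xle : forall t, (forall k, (k < t)%N -> D' k \subset D k) ->
    X Hi s vL vH' sp' t <= X Hi s vL vH sp t.
  move=> t H; rewrite /X ler_wpM2l ?(ltW s0) //; apply: ler_sum => k _.
  by rewrite /cD ler_nat; apply: subset_leq_card; apply: H.
have rle : forall t, (2 <= t)%N -> X Hi s vL vH' sp' t <= X Hi s vL vH sp t ->
    rr Hi s vL vH sp t <= rr Hi s vL vH' sp' t.
  move=> t ht hX; rewrite rq // rq' // lerD2r ler_wpM2l ?(ltW (MM_gt0 s0 s1 N0)) //.
  rewrite ler_wpM2l ?ler0n // lef_pV2 ?posrE //; [exact: Xp | exact: Xp'].
split.
  move=> hsp t; elim/ltn_ind: t => t IH ht.
  have hX : X Hi s vL vH' sp' t <= X Hi s vL vH sp t.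
    apply: Xle => k hk; case: (ltnP k 2) => hk2; first by rewrite sub01.
    exact: IH.
  apply/subsetP => i; case: (eqVneq (grp i) 0%N) => hi.
    by move=> _; apply: grp0D => //; apply: leq_trans ht.
  have hl := Hlow i hi.
  rewrite cF' // cF // => h.
  case: (leP (scrF vH' sp' vL (Hi i)) (scrF vH sp vL (Hi i))) => hF.
    by apply: le_lt_trans (rle t ht hX) (lt_le_trans h hF).
  have : i \in D 2.
    rewrite D2c // -hFx.
    rewrite ltNge; apply/negP => hle.
    have hix : Hi i <= x.
      rewrite leNgt; apply/negP => hxi; move: hle; rewrite leNgt.
      by rewrite F_inc.
    have : 0 < Gf (Hi i).
      rewrite GL; apply: lt_le_trans hGx _; rewrite lerDl.
      by apply: mulr_le0; rewrite subr_le0 // ltW.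
    move=> hG; have : 0 < Gf (Hi i) / ((1 - sp) * (1 - sp') * (vL - Hi i)).
      by apply: divr_gt0 => //; exact: denp.
    rewrite -sgn // subr_gt0 => hh.
    by move: hF; rewrite ltNge (ltW hh).
  move=> e2; have := subsetP (ml 2%N t ht) i e2.
  by rewrite cF.
move=> hsp.
case: (classic (exists t, (2 <= t)%N && ~~ (D' t \subset D t))) => [ex|nex]; last first.
  left => t ht; case: (boolP (D' t \subset D t)) => // hn; exfalso; apply: nex.
  by exists t; rewrite ht hn.
right; case: (ex_minnP ex) => t0 /andP [ht0 hbad] hmin.
have t0ne2 : t0 != 2%N by apply/negP => /eqP e; rewrite e Sub2 in hbad.
have ht0' : (3 <= t0)%N by rewrite ltn_neqAle eq_sym t0ne2 ht0.
have t0pos : (0 < t0)%N by apply: leq_trans ht0.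
have before : forall k, (k < t0)%N -> D' k \subset D k.
  move=> k hk; case: (ltnP k 2) => hk2; first by rewrite sub01.
  case: (boolP (D' k \subset D k)) => // hn.
  by have := hmin k; rewrite hk2 hn /= leqNgt hk => /(_ isT).
have hGvL : 0 < Gf vL.
  rewrite GL; apply: lt_le_trans hGx _; rewrite lerDl.
  by apply: mulr_ge0; rewrite subr_ge0 ltW // subr_gt0.
have Fdiff : forall H1 H2, H1 < H2 -> H2 < vL ->
    scrF vH' sp' vL H2 - scrF vH sp vL H2 < scrF vH' sp' vL H1 - scrF vH sp vL H1.
  move=> H1 H2 h12 h2L; have h1L := lt_trans h12 h2L.
  have idt : forall H, H < vL -> scrF vH sp vL H - scrF vH' sp' vL H =
      Gf vL / ((1 - sp) * (1 - sp')) * (vL - H)^-1 - (sp' - sp) / ((1 - sp) * (1 - sp')).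
    move=> H hH; rewrite sgn // /Gf; field.
    by rewrite !lt0r_neq0 // subr_gt0.
  suff : scrF vH sp vL H1 - scrF vH' sp' vL H1 < scrF vH sp vL H2 - scrF vH' sp' vL H2.
    by move=> hh; lra.
  rewrite !idt // ltrD2r ltr_pM2l; last by rewrite divr_gt0 // mulr_gt0.
  by rewrite ltf_pV2 ?posrE ?subr_gt0 // ltrD2l ltrN2.
exists t0.-1; split; first by rewrite -ltnS prednK.
split.
  move=> t ht htt; apply: before; by rewrite -(prednK t0pos) ltnS.
move/subsetPn: hbad => [g gD' gnD].
have hg : grp g != 0%N by apply/negP => /eqP e; rewrite (grp0D t0 g t0pos e) in gnD.
have hgl := Hlow g hg.
have t02 : (2 <= t0)%N := ht0.
move: gD' gnD; rewrite cF' // cF // -leNgt => gD' gnD.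
have X0 : X Hi s vL vH' sp' t0 <= X Hi s vL vH sp t0 by apply: Xle.
have r0 := rle t0 t02 X0.
have main : forall t, (t0 <= t)%N -> D t \subset D' t.
  elim/ltn_ind => t IH ht.
  have t2 : (2 <= t)%N by apply: leq_trans ht.
  apply/subsetP => i; case: (eqVneq (grp i) 0%N) => hi.
    by move=> _; apply: grp0D' => //; apply: leq_trans t2.
  have hl := Hlow i hi.
  case: (leP (Hi g) (Hi i)) => hgi.
    move=> _; apply: (subsetP (ml' t0 t ht)); rewrite cF' //.
    by apply: lt_le_trans gD' _; apply: F_le.
  rewrite cF // => hiD; case: (boolP (i \in D' t)) => // hni; exfalso.
  move: hni; rewrite cF' // -leNgt => hni.
  have chainA := Fdiff _ _ hgi hgl.
  suff : rr Hi s vL vH' sp' t - rr Hi s vL vH sp t <= rr Hi s vL vH' sp' t0 - rr Hi s vL vH sp t0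
    by move=> hh; lra.
  have dpos : 0 < rr Hi s vL vH' sp' t - rr Hi s vL vH sp t by lra.
  move: dpos; rewrite (rq t) // (rq' t) // (rq t0) // (rq' t0) //.
  have MMp := MM_gt0 s0 s1 N0.
  set q := t%:R / X Hi s vL vH sp t; set q' := t%:R / X Hi s vL vH' sp' t.
  set q0 := t0%:R / X Hi s vL vH sp t0; set q0' := t0%:R / X Hi s vL vH' sp' t0.
  move=> dpos.
  suff : q' - q <= q0' - q0.
    move=> hh; have := ler_wpM2l (ltW MMp) hh; lra.
  have Xt := Xp t t2; have Xt' := Xp' t t2.
  have X0p := Xp t0 t02; have X0p' := Xp' t0 t02.
  have tp0 : (0 : R) < t%:R by rewrite ltr0n; apply: leq_trans t2.
  have t0p0 : (0 : R) < t0%:R by rewrite ltr0n.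
  have e : q' - q = (X Hi s vL vH sp t - X Hi s vL vH' sp' t) / t%:R * q * q'.
    by rewrite /q /q'; field; rewrite !lt0r_neq0.
  have e0 : q0' - q0 = (X Hi s vL vH sp t0 - X Hi s vL vH' sp' t0) / t0%:R * q0 * q0'.
    by rewrite /q0 /q0'; field; rewrite !lt0r_neq0.
  have hq : 0 < q by apply: divr_gt0.
  have hq' : 0 < q' by apply: divr_gt0.
  have hq0 : q <= q0 by apply: qm.
  have hq0' : q' <= q0' by apply: qm'.
  have hD : X Hi s vL vH sp t - X Hi s vL vH' sp' t <=
            X Hi s vL vH sp t0 - X Hi s vL vH' sp' t0.
    rewrite /X -!mulrBr ler_wpM2l ?(ltW s0) //.
    apply: (sum_diff (f := cD Hi s vL vH sp) (g := cD Hi s vL vH' sp')) => // k hk1 hk2.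
    by rewrite /cD ler_nat; apply: subset_leq_card; apply: IH.
  have hdp : 0 < q' - q.
    have : 0 < MM N s * (q' - q) by rewrite mulrBr; lra.
    by rewrite pmulr_rgt0.
  set Dl := X Hi s vL vH sp t - X Hi s vL vH' sp' t in e hD.
  set Dl0 := X Hi s vL vH sp t0 - X Hi s vL vH' sp' t0 in e0 hD.
  have hDl : 0 < Dl / t%:R.
    rewrite ltNge; apply/negP => hn.
    have : Dl / t%:R * q * q' <= 0.
      by rewrite -mulrA; apply: mulr_le0_ge0 => //; apply: mulr_ge0; apply: ltW.
    by rewrite -e leNgt hdp.
  have hDl0 : 0 < Dl0.
    have : 0 < Dl by move: hDl; rewrite pmulr_lgt0 // invr_gt0.
    by move=> hh; apply: lt_le_trans hh hD.
  have hDD : Dl / t%:R <= Dl0 / t0%:R.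
    apply: le_trans (_ : Dl0 / t%:R <= _).
      by apply: ler_wpM2r => //; rewrite invr_ge0 ltW.
    apply: ler_wpM2l; first exact: ltW.
    by rewrite lef_pV2 ?posrE // ler_nat.
  rewrite e e0; apply: ler_pM; first by apply: mulr_ge0; apply: ltW.
  - exact: ltW.
  - by apply: ler_pM => //; apply: ltW.
  - exact: hq0'.
by move=> t ht; apply: main; rewrite -(prednK t0pos).
Qed.
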